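(* Let $T$ be an infinite, locally finite tree with maximum degree at least three and finite metric dimension. Then $$\beta(T)=\sum_{v\in V(T),\ \deg(v)\ge 3}\max\{P_T(v)-1,0\}.$$ Moreover, a set $S\subseteq V(T)$ is a metric basis of $T$ if and only if it is obtained as follows: for each vertex $v$ with $P_T(v)=k\ge 2$, choose $k-1$ vertices different from $v$ lying on $k-1$ distinct branch paths of $T$ at $v$ (and $S$ consists exactly of all the chosen vertices).
   Context: $d$ denotes shortest-path distance. A vertex $x$ resolves $u,v$ if $d(u,x)\ne d(v,x)$; a set of vertices is a resolving set if every pair of distinct vertices is resolved by some vertex of it. The metric dimension $\beta(T)$ is the minimum cardinality of a resolving set if a finite one exists, and $\infty$ otherwise; a metric basis is a resolving set of minimum cardinality. For a vertex $v$ of $T$, a branch of $T$ at $v$ is a maximal subtree of $T$ having $v$ as a leaf (so there are exactly $\deg(v)$ branches at $v$). A branch path of $T$ at $v$ is a branch at $v$ that is either a finite path or a one-way infinite path. $P_T(v)$ denotes the number of branch paths of $T$ at $v$. *)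

(* Defs.v *)
From Stdlib Require Import Arith List Lia ClassicalEpsilon.
Import ListNotations.

Section Graphs.
Context {V : Type} (adj : V -> V -> Prop).

Definition simple_graph : Prop :=
  (forall u v, adj u v -> adj v u) /\ (forall v, ~ adj v v).

Inductive walk : V -> V -> nat -> Prop :=
| walk_nil : forall u, walk u u 0
| walk_cons : forall u w v n, adj u w -> walk w v n -> walk u v (S n).

Inductive walk_in (B : V -> Prop) : V -> V -> Prop :=
| walk_in_nil : forall u, B u -> walk_in B u u
| walk_in_cons : forall u w v, B u -> adj u w -> walk_in B w v -> walk_in B u v.

Definition connected : Prop := forall u v, exists n, walk u v n.

Definition is_cycle (l : list V) : Prop :=
  exists x0, 3 <= length l /\ NoDup l /\
    (forall i, S i < length l -> adj (nth i l x0) (nth (S i) l x0)) /\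
    adj (nth (pred (length l)) l x0) (nth 0 l x0).

Definition is_tree : Prop := simple_graph /\ connected /\ ~ (exists l, is_cycle l).

Definition has_card {X : Type} (eqv : X -> X -> Prop) (A : X -> Prop) (n : nat) : Prop :=
  exists (l : list X) (d : X), length l = n /\
    (forall i, i < length l -> A (nth i l d)) /\
    (forall x, A x -> exists i, i < length l /\ eqv x (nth i l d)) /\
    (forall i j, i < length l -> j < length l -> i <> j ->
        ~ eqv (nth i l d) (nth j l d)).

Definition same_set (A B : V -> Prop) : Prop := forall x, A x <-> B x.

Definition infinite_vertices : Prop := ~ exists l : list V, forall x, In x l.

Definition locally_finite : Prop := forall v, exists n, has_card eq (adj v) n.

(* degree (meaningful in a locally finite graph) *)
Definition deg (v : V) : nat :=
  epsilon (inhabits 0) (fun n => has_card eq (adj v) n).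

Definition max_degree_ge3 : Prop := exists v, 3 <= deg v.

Definition dist (u v : V) (n : nat) : Prop :=
  walk u v n /\ forall m, walk u v m -> n <= m.

Definition resolves (x u v : V) : Prop :=
  exists a b, dist u x a /\ dist v x b /\ a <> b.

Definition resolving_set (S : V -> Prop) : Prop :=
  forall u v, u <> v -> exists x, S x /\ resolves x u v.

Definition metric_dim_is (n : nat) : Prop :=
  (exists S, resolving_set S /\ has_card eq S n) /\
  (forall S m, resolving_set S -> has_card eq S m -> n <= m).

Definition finite_metric_dim : Prop :=
  exists S m, resolving_set S /\ has_card eq S m.

Definition metric_basis (S : V -> Prop) : Prop :=
  resolving_set S /\ exists n, has_card eq S n /\ metric_dim_is n.

(* subtrees (connected vertex sets; induced subgraphs of a tree are forests) having
   v as a leaf, and branches = maximal such subtrees *)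
Definition subtree_with_leaf (v : V) (B : V -> Prop) : Prop :=
  B v /\ (forall x y, B x -> B y -> walk_in B x y) /\
  has_card eq (fun w => B w /\ adj v w) 1.

Definition branch (v : V) (B : V -> Prop) : Prop :=
  subtree_with_leaf v B /\
  forall B', (forall x, B x -> B' x) -> subtree_with_leaf v B' -> forall x, B' x -> B x.

Definition is_finite_path (B : V -> Prop) : Prop :=
  exists (l : list V) (d : V), NoDup l /\ l <> [] /\ (forall x, B x <-> In x l) /\
    (forall i j, i < length l -> j < length l ->
       (adj (nth i l d) (nth j l d) <-> (j = S i \/ i = S j))).

Definition is_ray (B : V -> Prop) : Prop :=
  exists f : nat -> V, (forall i j, f i = f j -> i = j) /\
    (forall x, B x <-> exists i, f i = x) /\
    (forall i j, adj (f i) (f j) <-> (j = S i \/ i = S j)).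

Definition branch_path (v : V) (B : V -> Prop) : Prop :=
  branch v B /\ (is_finite_path B \/ is_ray B).

Definition P (v : V) : nat :=
  epsilon (inhabits 0) (fun n => has_card same_set (branch_path v) n).

End Graphs.

Definition fsum_is {V : Type} (f : V -> nat) (n : nat) : Prop :=
  exists l : list V, NoDup l /\ (forall v, f v <> 0 -> In v l) /\
    n = fold_right (fun v acc => f v + acc) 0 l.

Definition obtained_by_selection {V : Type} (adj : V -> V -> Prop) (S : V -> Prop) : Prop :=
  exists sel : V -> list V,
    (forall v, 2 <= P adj v ->
       length (sel v) = P adj v - 1 /\
       exists (Bs : list (V -> Prop)) (dB : V -> Prop) (dx : V),
         length Bs = P adj v - 1 /\
         (forall i, i < length Bs ->
            branch_path adj v (nth i Bs dB) /\
            nth i (sel v) dx <> v /\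
            nth i Bs dB (nth i (sel v) dx)) /\
         (forall i j, i < length Bs -> j < length Bs -> i <> j ->
            ~ same_set (nth i Bs dB) (nth j Bs dB))) /\
    (forall v, P adj v < 2 -> sel v = []) /\
    (forall x, S x <-> exists v, In x (sel v)).

(* Main.v *)
Require Import Defs.
From Stdlib Require Import Arith List Lia Classical ClassicalEpsilon.
Import ListNotations.


Definition bP (P : Prop) : bool := if excluded_middle_informative P then true else false.
Lemma bP_true P : bP P = true <-> P.
Proof. unfold bP; destruct (excluded_middle_informative P); split; congruence || tauto. Qed.

Lemma pigeon n m (g : nat -> nat) :
  (forall i, i < n -> g i < m) -> (forall i j, i < n -> j < n -> g i = g j -> i = j) -> n <= m.
Proof.
  intros Hr Hi.
  assert (H : NoDup (map g (seq 0 n))).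
  { apply NoDup_map_NoDup_ForallPairs; [|apply seq_NoDup].
    intros a b Ha Hb E. apply in_seq in Ha; apply in_seq in Hb. apply Hi; lia. }
  apply NoDup_incl_length with (l' := seq 0 m) in H.
  - rewrite length_map, !length_seq in H; exact H.
  - intros x Hx. apply in_map_iff in Hx. destruct Hx as [i [<- Hi']].
    apply in_seq in Hi'. apply in_seq. specialize (Hr i). lia.
Qed.

Lemma hc_gen_le {X} (eqv : X -> X -> Prop) (l1 l2 : list X) d1 d2 :
  (forall x y, eqv x y -> eqv y x) -> (forall x y z, eqv x y -> eqv y z -> eqv x z) ->
  (forall i, i < length l1 -> exists j, j < length l2 /\ eqv (nth i l1 d1) (nth j l2 d2)) ->
  (forall i j, i < length l1 -> j < length l1 -> i <> j -> ~ eqv (nth i l1 d1) (nth j l1 d1)) ->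
  length l1 <= length l2.
Proof.
  intros Hs Ht Hc Hd.
  set (g := fun i => epsilon (inhabits 0) (fun j => j < length l2 /\ eqv (nth i l1 d1) (nth j l2 d2))).
  assert (Hg : forall i, i < length l1 -> g i < length l2 /\ eqv (nth i l1 d1) (nth (g i) l2 d2)).
  { intros i Hi. apply epsilon_spec. auto. }
  apply (pigeon _ _ g).
  - intros i Hi; apply Hg; auto.
  - intros i j Hi Hj E. destruct (Nat.eq_dec i j); auto. exfalso.
    apply (Hd i j Hi Hj n). destruct (Hg i Hi) as [_ A]. destruct (Hg j Hj) as [_ B].
    rewrite E in A. eauto.
Qed.


Section Tree.
Context {V : Type} (adj : V -> V -> Prop) (Htree : is_tree adj).

Lemma asym u v : adj u v -> adj v u. Proof. apply Htree. Qed.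
Lemma airr v : ~ adj v v. Proof. apply Htree. Qed.

Lemma walk_app u w v a b : walk adj u w a -> walk adj w v b -> walk adj u v (a + b).
Proof. induction 1; intros; simpl; auto. econstructor; eauto. Qed.

Lemma walk_rev u v n : walk adj u v n -> walk adj v u n.
Proof.
  induction 1. constructor.
  replace (S n) with (n + 1) by lia. eapply walk_app; eauto.
  econstructor. apply asym; eauto. constructor.
Qed.

Lemma walk_in_app B u w v : walk_in adj B u w -> walk_in adj B w v -> walk_in adj B u v.
Proof. induction 1; intros; auto. econstructor; eauto. Qed.

Lemma walk_in_B1 B u v : walk_in adj B u v -> B u.
Proof. destruct 1; auto. Qed.
Lemma walk_in_B2 B u v : walk_in adj B u v -> B v.
Proof. induction 1; auto. Qed.

Lemma walk_in_rev B u v : walk_in adj B u v -> walk_in adj B v u.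
Proof.
  induction 1. constructor; auto.
  eapply walk_in_app; eauto. econstructor. eapply walk_in_B1; eauto. apply asym; eauto.
  constructor; auto.
Qed.

Lemma walk_in_mono (B B' : V -> Prop) u v : walk_in adj B u v -> (forall x, B x -> B' x) -> walk_in adj B' u v.
Proof. induction 1; intros; econstructor; eauto. Qed.

Lemma walk_in_walk B u v : walk_in adj B u v -> exists n, walk adj u v n.
Proof. induction 1. exists 0; constructor. destruct IHwalk_in as [n Hn]. exists (S n); econstructor; eauto. Qed.

Lemma walk_split v u x n : walk adj u x n ->
  walk_in adj (fun z => z <> v) u x \/ exists a b, walk adj u v a /\ walk adj v x b /\ a + b = n.
Proof.
  induction 1.
  - destruct (classic (u = v)). subst. right. exists 0, 0. repeat split; constructor.
    left. constructor; auto.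
  - destruct (classic (u = v)).
    + subst. right. exists 0, (S n). repeat split. constructor. econstructor; eauto.
    + destruct IHwalk as [Hl | [a [b [Ha [Hb E]]]]].
      * left. econstructor; eauto.
      * right. exists (S a), b. repeat split; auto. econstructor; eauto. lia.
Qed.

Inductive pth : V -> V -> list V -> Prop :=
| pth1 : forall a, pth a a [a]
| pth2 : forall a b c l, adj a b -> pth b c l -> pth a c (a :: l).

Lemma walk_in_pth B a c : walk_in adj B a c -> exists l, pth a c l /\ forall z, In z l -> B z.
Proof.
  induction 1.
  - exists [u]; split. constructor. intros z [<-|[]]; auto.
  - destruct IHwalk_in as [l [Hl Hz]]. exists (u :: l). split. econstructor; eauto.
    intros z [<-|Hz']; auto.
Qed.

Lemma pth_suffix b c l x : pth b c l -> In x l -> exists l1 l2, pth x c l2 /\ l = l1 ++ l2.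
Proof.
  induction 1; intros Hx.
  - destruct Hx as [E|[]]. subst. exists [], [x]. split; auto. constructor.
  - destruct Hx as [E|Hx].
    + subst. exists [], (x :: l). split; auto. econstructor; eauto.
    + destruct (IHpth Hx) as [l1 [l2 [H1 H2]]]. exists (a :: l1), l2. subst. auto.
Qed.

Lemma pth_short a c l : pth a c l -> exists l', pth a c l' /\ NoDup l' /\ incl l' l.
Proof.
  induction 1.
  - exists [a]. split. constructor. split. repeat constructor; auto. apply incl_refl.
  - destruct IHpth as [l0 [Hp0 [N0 I0]]].
    destruct (classic (In a l0)) as [Hin|Hn].
    + destruct (pth_suffix _ _ _ _ Hp0 Hin) as [l1 [l2 [H2 E]]]. exists l2. split; auto.
      subst. split. eapply NoDup_app_remove_l; eauto.
      intros z Hz. right. apply I0. apply in_or_app; auto.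
    + exists (a :: l0). split. econstructor; eauto. split. constructor; auto.
      intros z [<-|Hz]. left; auto. right; auto.
Qed.

Lemma pth_nth0 a c l d : pth a c l -> nth 0 l d = a.
Proof. destruct 1; auto. Qed.
Lemma pth_len a c l : pth a c l -> 1 <= length l.
Proof. destruct 1; simpl; lia. Qed.
Lemma pth_last a c l d : pth a c l -> nth (length l - 1) l d = c.
Proof.
  induction 1. auto. pose proof (pth_len _ _ _ H0). destruct l. simpl in *; lia.
  change (nth (length (v :: l) - 0) (a :: v :: l) d = c).
  rewrite Nat.sub_0_r. simpl. simpl in IHpth. rewrite Nat.sub_0_r in IHpth. exact IHpth.
Qed.
Lemma pth_adj a c l d : pth a c l -> forall i, S i < length l -> adj (nth i l d) (nth (S i) l d).
Proof.
  induction 1; intros i Hi. simpl in Hi; lia.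
  destruct i. simpl. erewrite pth_nth0; eauto. simpl. apply IHpth. simpl in Hi; lia.
Qed.

Lemma no_cycle_nb v w1 w2 : adj v w1 -> adj v w2 -> w1 <> w2 ->
  walk_in adj (fun z => z <> v) w1 w2 -> False.
Proof.
  intros H1 H2 Hne Hw.
  destruct (walk_in_pth _ _ _ Hw) as [l0 [Hl0 Hz0]].
  destruct (pth_short _ _ _ Hl0) as [l [Hl [Nl Il]]].
  destruct Htree as [_ [_ Hnc]]. apply Hnc. exists (v :: l), v.
  assert (Hlen : 2 <= length l).
  { destruct l as [|x [|y l']]. inversion Hl. inversion Hl; subst. congruence.
    match goal with H : pth _ _ [] |- _ => inversion H end. simpl; lia. }
  split. simpl; lia. split.
  { constructor; auto. intros Hin. apply (Hz0 v); auto. }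
  split.
  - intros i Hi. destruct i. simpl. rewrite (pth_nth0 _ _ _ v Hl); auto.
    simpl. apply (pth_adj _ _ _ v Hl). simpl in Hi; lia.
  - pose proof (pth_last _ _ _ v Hl) as HL.
    destruct l as [|x l']. simpl in Hlen; lia.
    simpl in HL |- *. rewrite Nat.sub_0_r in HL. destruct l' as [|y l'']. simpl in Hlen; lia.
    rewrite HL. apply asym; auto.
Qed.


Lemma ex_min (Q : nat -> Prop) : (exists n, Q n) -> exists n, Q n /\ forall m, Q m -> n <= m.
Proof.
  intros [N HN]. revert HN. induction N as [N IH] using lt_wf_ind. intros HN.
  destruct (classic (exists m, m < N /\ Q m)) as [[m [Hm Qm]]|Hno].
  - eapply IH; eauto.
  - exists N. split; auto. intros m Qm. destruct (le_lt_dec N m); auto. exfalso; eauto.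
Qed.

Hypothesis Hconn : connected adj.

Definition dd (u v : V) : nat := epsilon (inhabits 0) (dist adj u v).

Lemma dd_spec u v : dist adj u v (dd u v).
Proof.
  unfold dd. apply epsilon_spec. destruct (ex_min (walk adj u v) (Hconn u v)) as [n [H1 H2]].
  exists n; split; auto.
Qed.
Lemma dd_walk u v n : walk adj u v n -> dd u v <= n.
Proof. intros; apply (dd_spec u v); auto. Qed.
Lemma dd_walk_ex u v : walk adj u v (dd u v).
Proof. apply dd_spec. Qed.
Lemma dist_dd u v n : dist adj u v n -> n = dd u v.
Proof.
  intros [H1 H2]. pose proof (dd_walk _ _ _ H1). pose proof (H2 _ (dd_walk_ex u v)). lia.
Qed.
Lemma dd_sym u v : dd u v = dd v u.
Proof.
  pose proof (dd_walk _ _ _ (walk_rev _ _ _ (dd_walk_ex u v))).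
  pose proof (dd_walk _ _ _ (walk_rev _ _ _ (dd_walk_ex v u))). lia.
Qed.
Lemma dd_tri u v w : dd u w <= dd u v + dd v w.
Proof. apply dd_walk. apply walk_app with (w := v); apply dd_walk_ex. Qed.
Lemma dd_0 u v : dd u v = 0 -> u = v.
Proof. intros H. pose proof (dd_walk_ex u v). rewrite H in H0. inversion H0; auto. Qed.
Lemma dd_refl u : dd u u = 0.
Proof. pose proof (dd_walk _ _ _ (walk_nil adj u)). lia. Qed.
Lemma dd_adj u v : adj u v -> dd u v = 1.
Proof.
  intros H. assert (dd u v <= 1). apply dd_walk. econstructor; eauto. constructor.
  destruct (dd u v) eqn:E; [|lia]. apply dd_0 in E. subst. exfalso; eapply airr; eauto.
Qed.

Definition comp (v w x : V) : Prop := adj v w /\ walk_in adj (fun z => z <> v) w x.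

Lemma comp_ne v w x : comp v w x -> x <> v.
Proof. intros [_ H]. apply walk_in_B2 in H. auto. Qed.
Lemma comp_self v w : adj v w -> comp v w w.
Proof. intros H. split; auto. constructor. intros E; subst; eapply airr; eauto. Qed.

Lemma comp_ex v x : x <> v -> exists w, comp v w x /\ dd v x = S (dd w x).
Proof.
  intros Hx. pose proof (dd_walk_ex v x) as Hw. remember (dd v x) as n.
  inversion Hw; subst. congruence.
  exists w. destruct (walk_split v _ _ _ H0) as [Hl | [a [b [Ha [Hb E]]]]].
  - split. split; auto. pose proof (dd_walk _ _ _ H0).
    assert (dd v x <= S (dd w x)). { apply dd_walk. econstructor; eauto. apply dd_walk_ex. }
    lia.
  - exfalso. pose proof (dd_walk _ _ _ Hb). lia.
Qed.

Lemma comp_uniq v w1 w2 x : comp v w1 x -> comp v w2 x -> w1 = w2.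
Proof.
  intros [H1 W1] [H2 W2]. destruct (classic (w1 = w2)); auto. exfalso.
  apply (no_cycle_nb v w1 w2); auto. eapply walk_in_app; eauto. apply walk_in_rev; auto.
Qed.

Lemma comp_step v w x z : comp v w x -> adj x z -> z <> v -> comp v w z.
Proof.
  intros [H1 W] Ha Hz. split; auto. apply walk_in_app with (w := x); auto.
  econstructor; [exact (walk_in_B2 _ _ _ W) | eauto | constructor; auto].
Qed.

Lemma comp_dd v w x : comp v w x -> dd v x = S (dd w x).
Proof.
  intros Hc. destruct (comp_ex v x (comp_ne _ _ _ Hc)) as [w' [Hc' E]].
  rewrite (comp_uniq _ _ _ _ Hc Hc'). auto.
Qed.

Lemma comp_split v w x y : comp v w x -> ~ comp v w y -> dd y x = dd y v + dd v x.
Proof.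
  intros Hc Hn. pose proof (dd_tri y v x).
  destruct (walk_split v _ _ _ (dd_walk_ex y x)) as [Hl | [a [b [Ha [Hb E]]]]].
  - exfalso. apply Hn. destruct Hc as [H1 W]. split; auto.
    eapply walk_in_app; eauto. apply walk_in_rev; auto.
  - pose proof (dd_walk _ _ _ Ha). pose proof (dd_walk _ _ _ Hb). lia.
Qed.

Lemma nb_cases x y z : x <> y -> adj x z ->
  (comp x z y /\ dd y x = S (dd y z)) \/ (~ comp x z y /\ dd y z = S (dd y x)).
Proof.
  intros Hxy Ha. destruct (classic (comp x z y)) as [Hc|Hn].
  - left. split; auto. rewrite (dd_sym y x), (dd_sym y z). apply comp_dd; auto.
  - right. split; auto. rewrite (comp_split x z z y (comp_self _ _ Ha) Hn).
    rewrite (dd_adj _ _ Ha). lia.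
Qed.

Lemma adj_dd y a b : adj a b -> dd y b = S (dd y a) \/ dd y a = S (dd y b).
Proof.
  intros H. destruct (classic (a = y)).
  - subst y. left. rewrite dd_refl, (dd_sym a b), (dd_adj _ _ (asym _ _ H)). auto.
  - destruct (nb_cases a y b) as [[_ E]|[_ E]]; auto.
Qed.

Lemma comp_walk v w u x : walk_in adj (fun z => z <> v) u x -> comp v w u ->
  walk_in adj (comp v w) u x.
Proof.
  induction 1; intros Hc. constructor; auto.
  econstructor; eauto. apply IHwalk_in. eapply comp_step; eauto. exact (walk_in_B1 _ _ _ H1).
Qed.

Lemma comp_nest c a y p z : comp c a y -> comp y p z -> ~ comp y p c -> comp c a z.
Proof.
  intros Hca Hyp Hn.
  assert (Hw : walk_in adj (fun t => t <> c) p z).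
  { destruct Hyp as [Hyp1 W]. eapply walk_in_mono. apply comp_walk; eauto. apply comp_self; auto.
    intros t Ht E; subst; auto. }
  destruct Hca as [Ha W]. split; auto. apply walk_in_app with (w := y); auto.
  econstructor. exact (walk_in_B2 _ _ _ W). destruct Hyp; eauto. auto.
Qed.


Definition Br (v w x : V) : Prop := x = v \/ comp v w x.
Definition pathlike (B : V -> Prop) : Prop := is_finite_path adj B \/ is_ray adj B.
Definition PB (v w : V) : Prop := adj v w /\ pathlike (Br v w).

Lemma hc1_eq (A : V -> Prop) a b : has_card eq A 1 -> A a -> A b -> a = b.
Proof.
  intros [l [d [Hl [_ [Hc _]]]]] Ha Hb.
  destruct (Hc a Ha) as [i [Hi Ei]]. destruct (Hc b Hb) as [j [Hj Ej]].
  assert (i = 0) by lia. assert (j = 0) by lia. subst. auto.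
Qed.

Lemma last_step (B : V -> Prop) x v : walk_in adj B x v -> x <> v ->
  exists z, adj z v /\ B z /\ walk_in adj (fun t => B t /\ t <> v) x z.
Proof.
  induction 1; intros Hne. congruence.
  destruct (classic (w = v)).
  - subst. exists u. split; auto. split; auto. constructor; auto.
  - destruct (IHwalk_in H2) as [z [Hz1 [Hz2 Hz3]]]. exists z. split; auto. split; auto.
    econstructor; eauto.
Qed.

Lemma Br_conn v w x : adj v w -> Br v w x -> walk_in adj (Br v w) v x.
Proof.
  intros Ha [E|Hc]. subst. constructor. left; auto.
  econstructor. left; auto. exact Ha.
  destruct Hc as [_ W]. eapply walk_in_mono. apply comp_walk; eauto. apply comp_self; auto.
  intros t Ht; right; auto.
Qed.

Lemma Br_swl v w : adj v w -> subtree_with_leaf adj v (Br v w).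
Proof.
  intros Ha. split. left; auto. split.
  - intros x y Hx Hy. apply walk_in_app with (w := v). apply walk_in_rev, Br_conn; auto. apply Br_conn; auto.
  - exists [w], w. split; auto. split.
    + intros i Hi. simpl in Hi. assert (i = 0) by lia. subst. simpl. split; auto. right. apply comp_self; auto.
    + split.
      * intros x [[E|Hc] Hx]. subst. exfalso; eapply airr; eauto.
        exists 0. split. simpl; lia. simpl. eapply comp_uniq; eauto. apply comp_self; auto.
      * intros i j Hi Hj. simpl in *. lia.
Qed.

Lemma swl_sub v B : subtree_with_leaf adj v B -> exists w, adj v w /\ B w /\ forall x, B x -> Br v w x.
Proof.
  intros [Hv [Hcn Hc]].
  destruct Hc as [l [d [Hl [Hin [Hcov Hd]]]]].
  destruct (Hin 0 ltac:(lia)) as [Hw1 Hw2].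
  set (w := nth 0 l d) in *.
  assert (Hc1 : has_card eq (fun z => B z /\ adj v z) 1). { exists l, d; auto. }
  exists w. split; auto. split; auto.
  intros x Hx. destruct (classic (x = v)). left; auto. right.
  destruct (last_step B x v (Hcn x v Hx Hv) H) as [z [Hz1 [Hz2 Hz3]]].
  assert (z = w). { apply (hc1_eq _ _ _ Hc1). split; auto. apply asym; auto. split; auto. }
  subst z. split; auto. apply walk_in_rev. eapply walk_in_mono; eauto. intros t [_ ?]; auto.
Qed.

Lemma Br_branch v w : adj v w -> branch adj v (Br v w).
Proof.
  intros Ha. split. apply Br_swl; auto.
  intros B' Hsub Hswl x Hx.
  destruct (swl_sub v B' Hswl) as [w' [Ha' [Hw' Hall]]].
  apply Hall in Hx. destruct (swl_sub v B' Hswl) as [_ _].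
  assert (w' = w).
  { destruct Hswl as [_ [_ Hc1]]. apply (hc1_eq _ _ _ Hc1). split; auto. split; auto.
    apply Hsub. right; apply comp_self; auto. }
  subst; auto.
Qed.

Lemma branch_Br v B : branch adj v B -> exists w, adj v w /\ same_set B (Br v w).
Proof.
  intros [Hswl Hmax]. destruct (swl_sub v B Hswl) as [w [Ha [Hw Hall]]].
  exists w. split; auto. intros x. split; auto.
  apply Hmax; auto. apply Br_swl; auto.
Qed.

Lemma pathlike_same B B' : same_set B B' -> pathlike B -> pathlike B'.
Proof.
  intros Hs [[l [d [H1 [H2 [H3 H4]]]]]|[f [H1 [H2 H3]]]].
  - left. exists l, d. split; auto. split; auto. split; auto.
    intros x; split; intros Hx; [apply H3, Hs|apply Hs, H3]; auto.
  - right. exists f. split; auto. split; auto.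
    intros x; split; intros Hx; [apply H2, Hs|apply Hs, H2]; auto.
Qed.

Lemma same_set_sym (A B : V -> Prop) : same_set A B -> same_set B A.
Proof. intros H x; split; apply H. Qed.
Lemma same_set_trans (A B C : V -> Prop) : same_set A B -> same_set B C -> same_set A C.
Proof. intros H1 H2 x; split; intros; [apply H2, H1|apply H1, H2]; auto. Qed.

Lemma bp_PB v B : branch_path adj v B -> exists w, PB v w /\ same_set B (Br v w).
Proof.
  intros [Hb Hp]. destruct (branch_Br v B Hb) as [w [Ha Hs]]. exists w. split; auto.
  split; auto. eapply pathlike_same; eauto.
Qed.

Lemma PB_bp v w : PB v w -> branch_path adj v (Br v w).
Proof. intros [Ha Hp]. split; auto. apply Br_branch; auto. Qed.

Lemma Br_inj v w1 w2 : adj v w1 -> adj v w2 -> same_set (Br v w1) (Br v w2) -> w1 = w2.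
Proof.
  intros H1 H2 Hs. destruct (proj1 (Hs w1) (or_intror (comp_self _ _ H1))) as [E|Hc].
  subst. exfalso; eapply airr; eauto.
  symmetry. eapply comp_uniq; eauto. apply comp_self; auto.
Qed.


Definition big (z : V) : Prop := exists a b c, adj z a /\ adj z b /\ adj z c /\ a <> b /\ a <> c /\ b <> c.

Lemma dd1_adj y x : dd y x = 1 -> adj y x.
Proof.
  intros E. pose proof (dd_walk_ex y x) as W. rewrite E in W.
  inversion W as [|? w ? ? Ha Hw]; subst. inversion Hw; subst. auto.
Qed.

Section PathCon.
Variables (y p : V) (Hyp : adj y p) (Hsm : forall z, comp y p z -> ~ big z).

Definition nxt (a b : V) : V := epsilon (inhabits b) (fun z => adj b z /\ z <> a).
Fixpoint fp (n : nat) : V * V :=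
  match n with 0 => (y, p) | S n => (snd (fp n), nxt (fst (fp n)) (snd (fp n))) end.
Definition f (n : nat) : V := fst (fp n).

Lemma f0 : f 0 = y. Proof. reflexivity. Qed.
Lemma f1 : f 1 = p. Proof. reflexivity. Qed.
Lemma fSS n : f (S (S n)) = nxt (f n) (f (S n)).
Proof. reflexivity. Qed.

Definition alive (k : nat) : Prop := exists z, adj (f (S k)) z /\ z <> f k.

Lemma alive_spec k : alive k -> adj (f (S k)) (f (S (S k))) /\ f (S (S k)) <> f k.
Proof. intros H. rewrite fSS. unfold nxt. apply (epsilon_spec (inhabits (f (S k))) (fun z => adj (f (S k)) z /\ z <> f k)). exact H. Qed.

Lemma claim n : (forall k, k < n -> alive k) ->
  adj (f n) (f (S n)) /\ dd y (f n) = n /\ dd y (f (S n)) = S n /\ comp y p (f (S n)).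
Proof.
  induction n; intros Hal.
  - rewrite f0, f1. split; auto. rewrite dd_refl, dd_adj; auto. split; auto. split; auto.
    apply comp_self; auto.
  - destruct IHn as [A1 [A2 [A3 A4]]]. intros k Hk; apply Hal; lia.
    destruct (alive_spec n (Hal n ltac:(lia))) as [B1 B2].
    set (x := f (S n)) in *. set (z := f (S (S n))) in *.
    assert (Hxy : x <> y). { intros E. rewrite E, dd_refl in A3. lia. }
    split; auto. split; auto.
    destruct (nb_cases x y z Hxy B1) as [[C1 C2]|[C1 C2]].
    + exfalso. destruct (nb_cases x y (f n) Hxy (asym _ _ A1)) as [[D1 D2]|[D1 D2]].
      * apply B2. eapply comp_uniq; eauto.
      * lia.
    + split. lia. eapply comp_step; eauto. intros E. rewrite E, dd_refl in C2. lia.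
Qed.

Lemma cover m x : comp y p x -> dd y x = S m -> (forall k, k < m -> alive k) /\ x = f (S m).
Proof.
  revert x. induction m; intros x Hc E.
  - split. intros; lia. rewrite f1. apply dd1_adj in E. symmetry. eapply comp_uniq; eauto. apply comp_self; auto.
  - assert (Hxy : x <> y). { intros E'. rewrite E', dd_refl in E. lia. }
    destruct (comp_ex x y (not_eq_sym Hxy)) as [t [Ht Et]].
    rewrite (dd_sym x y), E, (dd_sym t y) in Et. injection Et as Et.
    assert (Hty : t <> y). { intros E'. rewrite E', dd_refl in Et. lia. }
    assert (Hct : comp y p t). { eapply comp_step; eauto. destruct Ht; auto. }
    destruct (IHm t Hct (eq_sym Et)) as [Hal Ht'].
    destruct (claim m Hal) as [A1 [A2 [A3 A4]]].
    assert (Hxa : x <> f m). { intros E'. rewrite E', A2 in E. lia. }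
    assert (Hal' : alive m). { exists x. split; auto. rewrite <- Ht'. apply asym. destruct Ht; auto. }
    split. intros k Hk. destruct (Nat.eq_dec k m). subst; auto. apply Hal; lia.
    destruct (alive_spec m Hal') as [B1 B2].
    destruct (classic (x = f (S (S m)))) as [|Hne]; auto. exfalso.
    apply (Hsm t Hct). exists (f m), (f (S (S m))), x. rewrite Ht'.
    split. apply asym; auto. split; auto. split. apply asym. rewrite <- Ht'. destruct Ht; auto.
    split. auto. split. auto. auto.
Qed.

Lemma adj_f_idx i j : (forall k, k < i -> alive k) -> (forall k, k < j -> alive k) ->
  adj (f i) (f j) -> j = S i \/ i = S j.
Proof.
  intros Hi Hj Ha. destruct (claim i Hi) as [_ [Di _]]. destruct (claim j Hj) as [_ [Dj _]].
  destruct (adj_dd y _ _ Ha); lia.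
Qed.

Lemma Br_pathlike : pathlike (Br y p).
Proof.
  destruct (classic (forall k, alive k)) as [Hall|Hn].
  - right. exists f. split.
    + intros i j E. destruct (claim i (fun k _ => Hall k)) as [_ [Di _]].
      destruct (claim j (fun k _ => Hall k)) as [_ [Dj _]]. rewrite E in Di. lia.
    + split.
      * intros x. split.
        -- intros [E|Hc]. exists 0; auto.
           destruct (dd y x) eqn:E. apply dd_0 in E. subst. exfalso; eapply comp_ne; eauto.
           exists (S n). symmetry. apply (cover n x Hc E).
        -- intros [[|i] <-]. left; auto. right. apply (claim i (fun k _ => Hall k)).
      * intros i j. split. apply adj_f_idx; auto.
        intros [->| ->]. apply (claim i (fun k _ => Hall k)). apply asym, (claim j (fun k _ => Hall k)).
  - assert (Hex : exists K, ~ alive K). { apply not_all_ex_not; auto. }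
    destruct (ex_min _ Hex) as [K [HK Hmin]].
    assert (Hal : forall k, k < K -> alive k).
    { intros k Hk. destruct (classic (alive k)); auto. specialize (Hmin k H). lia. }
    left. exists (map f (seq 0 (S (S K)))), y.
    assert (Hnth : forall i, i < S (S K) -> nth i (map f (seq 0 (S (S K)))) y = f i).
    { intros i Hi. rewrite <- f0. rewrite map_nth. rewrite seq_nth; auto. }
    rewrite length_map, length_seq.
    assert (Hd : forall i, i <= S K -> dd y (f i) = i).
    { intros i Hi. destruct i. rewrite f0, dd_refl; auto. apply (claim i). intros k Hk. apply Hal. lia. }
    split.
    + apply NoDup_nth with (d := y). rewrite length_map, length_seq. intros i j Hi Hj E.
      rewrite !Hnth in E by auto. rewrite <- (Hd i), <- (Hd j) by lia. rewrite E; auto.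
    + split. simpl; congruence. split.
      * intros x. rewrite in_map_iff. split.
        -- intros [E|Hc]. exists 0. split. subst; auto. apply in_seq. lia.
           destruct (dd y x) eqn:E. apply dd_0 in E. subst. exfalso; eapply comp_ne; eauto.
           destruct (cover n x Hc E) as [H1 H2]. exists (S n). split; auto. apply in_seq.
           destruct (le_lt_dec n K); [lia|]. exfalso. apply HK, H1; auto.
        -- intros [i [<- Hi]]. apply in_seq in Hi. destruct i. left; auto. right.
           apply (claim i). intros k Hk; apply Hal; lia.
      * intros i j Hi Hj. rewrite !Hnth by auto. split.
        -- intros Ha. destruct (adj_dd y _ _ Ha); rewrite !Hd in H by lia; lia.
        -- intros [->| ->]. apply (claim i). intros k Hk; apply Hal; lia.
           apply asym, (claim j). intros k Hk; apply Hal; lia.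
Qed.

End PathCon.


Lemma hc_eq_to_list (A : V -> Prop) n : has_card eq A n -> exists l, NoDup l /\ length l = n /\ forall x, A x <-> In x l.
Proof.
  intros [l [d [L [HA [HC HD]]]]]. exists l. split; [|split; [exact L|]].
  - apply (NoDup_nth l d). intros i j Hi Hj E. destruct (Nat.eq_dec i j); auto. exfalso. exact (HD i j Hi Hj n0 E).
  - intros x. split.
    + intros Hx. destruct (HC x Hx) as [i [Hi ->]]. apply nth_In; auto.
    + intros Hx. destruct (In_nth l x d Hx) as [i [Hi <-]]. apply HA; auto.
Qed.

Lemma list_to_hc {X} (d : X) (A : X -> Prop) l : NoDup l -> (forall x, A x <-> In x l) -> has_card eq A (length l).
Proof.
  intros N H. exists l, d. split; auto. split. intros i Hi. apply H, nth_In; auto.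
  split. intros x Hx. apply H in Hx. destruct (In_nth l x d Hx) as [i [Hi E]]. exists i; auto.
  intros i j Hi Hj Hne E. apply Hne. eapply NoDup_nth; eauto.
Qed.

Lemma hc_le {X} (eqv : X -> X -> Prop) A n m :
  (forall x y, eqv x y -> eqv y x) -> (forall x y z, eqv x y -> eqv y z -> eqv x z) ->
  has_card eqv A n -> has_card eqv A m -> n <= m.
Proof.
  intros Hs Ht [l1 [d1 [L1 [A1 [C1 D1]]]]] [l2 [d2 [L2 [A2 [C2 D2]]]]]. subst n m.
  apply (hc_gen_le eqv l1 l2 d1 d2); [exact Hs|exact Ht| |exact D1]. intros i Hi. apply C2. apply A1; auto.
Qed.

Hypothesis Hlf : locally_finite adj.

Lemma deg_spec v : has_card eq (adj v) (deg adj v).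
Proof. unfold deg. apply epsilon_spec. apply Hlf. Qed.

Lemma nbr_list v : exists l, NoDup l /\ length l = deg adj v /\ forall w, adj v w <-> In w l.
Proof. apply hc_eq_to_list, deg_spec. Qed.

Lemma big_deg v : big v <-> 3 <= deg adj v.
Proof.
  destruct (nbr_list v) as [l [N [L H]]]. split.
  - intros [a [b [c [Ha [Hb [Hc [Hab [Hac Hbc]]]]]]]].
    rewrite <- L. apply (@NoDup_incl_length _ [a;b;c]).
    + constructor. simpl; intuition. constructor. simpl; intuition. constructor; auto. constructor.
    + intros z [<-|[<-|[<-|[]]]]; apply H; auto.
  - intros Hd. rewrite <- L in Hd. destruct l as [|a [|b [|c l']]]; simpl in Hd; try lia.
    exists a, b, c. inversion N; subst. inversion H3; subst. simpl in *.
    split. apply H; simpl; auto. split. apply H; simpl; auto. split. apply H; simpl; auto.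
    split. intuition. split. intuition. intuition.
Qed.

Lemma PB_list v : exists Lw, NoDup Lw /\ forall w, PB v w <-> In w Lw.
Proof.
  destruct (nbr_list v) as [l [N [_ H]]]. exists (filter (fun w => bP (PB v w)) l). split.
  apply NoDup_filter; auto.
  intros w. rewrite filter_In, bP_true. split. intros Hp. split; auto. apply H, Hp. tauto.
Qed.

Lemma P_spec v : exists Lw, NoDup Lw /\ (forall w, PB v w <-> In w Lw) /\ P adj v = length Lw.
Proof.
  destruct (PB_list v) as [Lw [N H]]. exists Lw. split; auto. split; auto.
  assert (Hc : has_card same_set (branch_path adj v) (length Lw)).
  { exists (map (Br v) Lw), (Br v v). rewrite length_map. split; auto. split.
    - intros i Hi. rewrite map_nth. apply PB_bp, H, nth_In; auto.
    - split.
      + intros B HB. destruct (bp_PB v B HB) as [w [Hw Hs]]. apply H in Hw.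
        destruct (In_nth Lw w v Hw) as [i [Hi E]]. exists i. split; auto. rewrite map_nth, E; auto.
      + intros i j Hi Hj Hne Hs. rewrite !map_nth in Hs. apply Hne.
        apply (proj1 (NoDup_nth Lw v) N); auto. apply (Br_inj v).
        apply (proj2 (H (nth i Lw v)) (nth_In _ _ Hi)). apply (proj2 (H (nth j Lw v)) (nth_In _ _ Hj)). auto. }
  assert (Hp : has_card same_set (branch_path adj v) (P adj v)).
  { unfold P. apply epsilon_spec. eauto. }
  pose proof (hc_le same_set _ _ _ (same_set_sym) (same_set_trans) Hc Hp).
  pose proof (hc_le same_set _ _ _ (same_set_sym) (same_set_trans) Hp Hc). lia.
Qed.

Lemma good_iff v : 2 <= P adj v <-> exists w1 w2, PB v w1 /\ PB v w2 /\ w1 <> w2.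
Proof.
  destruct (P_spec v) as [Lw [N [H E]]]. rewrite E. split.
  - intros Hl. destruct Lw as [|a [|b l']]; simpl in Hl; try lia. exists a, b.
    split. apply H; simpl; auto. split. apply H; simpl; auto. inversion N; subst. simpl in *; intuition.
  - intros [w1 [w2 [H1 [H2 Hne]]]]. apply (@NoDup_incl_length _ [w1; w2]).
    constructor. simpl; intuition. constructor; auto. constructor.
    intros z [<-|[<-|[]]]; apply H; auto.
Qed.

Lemma nb_in_Br v w u z : comp v w u -> adj u z -> Br v w z.
Proof.
  intros Hc Ha. destruct (classic (z = v)). left; auto. right. eapply comp_step; eauto.
Qed.

Lemma three_idx i ja jb jc : (ja = S i \/ i = S ja) -> (jb = S i \/ i = S jb) -> (jc = S i \/ i = S jc) ->
  ja = jb \/ ja = jc \/ jb = jc.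
Proof. lia. Qed.

Lemma PB_small v w u : PB v w -> comp v w u -> ~ big u.
Proof.
  intros [Hvw [[l [d [_ [_ [Hl Hadj]]]]]|[g [Hinj [Hg Hadj]]]]] Hc [a [b [c [Ha [Hb [Hcc [Hab [Hac Hbc]]]]]]]].
  - assert (Hu : In u l) by (apply Hl; right; auto).
    destruct (In_nth l u d Hu) as [i [Hi Ei]].
    assert (Hidx : forall z, adj u z -> exists j, j < length l /\ nth j l d = z /\ (j = S i \/ i = S j)).
    { intros z Hz. assert (In z l) by (apply Hl; eapply nb_in_Br; eauto).
      destruct (In_nth l z d H) as [j [Hj Ej]]. exists j. split; auto. split; auto.
      apply Hadj; auto. rewrite Ei, Ej; auto. }
    destruct (Hidx a Ha) as [ja [_ [Ea Pa]]]. destruct (Hidx b Hb) as [jb [_ [Eb Pb]]].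
    destruct (Hidx c Hcc) as [jc [_ [Ec Pc]]].
    destruct (three_idx i ja jb jc Pa Pb Pc) as [E|[E|E]]; subst; congruence.
  - assert (Hu : exists i, g i = u) by (apply Hg; right; auto). destruct Hu as [i Ei].
    assert (Hidx : forall z, adj u z -> exists j, g j = z /\ (j = S i \/ i = S j)).
    { intros z Hz. assert (exists j, g j = z) by (apply Hg; eapply nb_in_Br; eauto).
      destruct H as [j Ej]. exists j. split; auto. apply Hadj. rewrite Ei, Ej; auto. }
    destruct (Hidx a Ha) as [ja [Ea Pa]]. destruct (Hidx b Hb) as [jb [Eb Pb]].
    destruct (Hidx c Hcc) as [jc [Ec Pc]].
    destruct (three_idx i ja jb jc Pa Pb Pc) as [E|[E|E]]; subst; congruence.
Qed.

Hypothesis Hmax : max_degree_ge3 adj.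

Lemma good_deg v : 2 <= P adj v -> 3 <= deg adj v.
Proof.
  intros Hg. apply good_iff in Hg. destruct Hg as [w1 [w2 [H1 [H2 Hne]]]].
  destruct Hmax as [u0 Hu0]. apply big_deg in Hu0.
  destruct (classic (u0 = v)). subst; apply big_deg; auto.
  destruct (comp_ex v u0 H) as [w [Hc _]]. apply big_deg.
  assert (A1 : w <> w1). { intros E; subst w; exact (PB_small v w1 u0 H1 Hc Hu0). }
  assert (A2 : w <> w2). { intros E; subst w; exact (PB_small v w2 u0 H2 Hc Hu0). }
  exists w, w1, w2. split. destruct Hc; auto. split. apply H1. split. apply H2. auto.
Qed.

Lemma fval v : (if 3 <=? deg adj v then P adj v - 1 else 0) = P adj v - 1.
Proof.
  destruct (3 <=? deg adj v) eqn:E; auto. apply Nat.leb_gt in E.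
  destruct (le_lt_dec 2 (P adj v)). apply good_deg in l. lia. lia.
Qed.


Lemma resolves_iff x u v : resolves adj x u v <-> dd u x <> dd v x.
Proof.
  split.
  - intros [a [b [Ha [Hb Hne]]]]. apply dist_dd in Ha. apply dist_dd in Hb. congruence.
  - intros Hne. exists (dd u x), (dd v x). split. apply dd_spec. split. apply dd_spec. auto.
Qed.

Definition Hit (S : V -> Prop) : Prop := forall v w1 w2, PB v w1 -> PB v w2 -> w1 <> w2 ->
  (exists s, S s /\ comp v w1 s) \/ (exists s, S s /\ comp v w2 s).

Lemma LB_hit S v w1 w2 : resolving_set adj S -> adj v w1 -> adj v w2 -> w1 <> w2 ->
  (exists s, S s /\ comp v w1 s) \/ (exists s, S s /\ comp v w2 s).
Proof.
  intros HS H1 H2 Hne. apply NNPP. intros Hn.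
  destruct (HS w1 w2 Hne) as [x [Hx Hr]]. apply resolves_iff in Hr. apply Hr.
  assert (N1 : ~ comp v w1 x) by (intros Hc; apply Hn; left; eauto).
  assert (N2 : ~ comp v w2 x) by (intros Hc; apply Hn; right; eauto).
  rewrite (dd_sym w1 x), (dd_sym w2 x).
  rewrite (comp_split v w1 w1 x (comp_self _ _ H1) N1), (comp_split v w2 w2 x (comp_self _ _ H2) N2).
  rewrite (dd_adj _ _ H1), (dd_adj _ _ H2). auto.
Qed.

Lemma resolving_Hit S : resolving_set adj S -> Hit S.
Proof. intros HS v w1 w2 [H1 _] [H2 _] Hne. apply LB_hit; auto. Qed.

Lemma two_others (t a1 a2 a3 : V) : a1 <> a2 -> a1 <> a3 -> a2 <> a3 ->
  exists b1 b2, b1 <> b2 /\ b1 <> t /\ b2 <> t /\ (b1 = a1 \/ b1 = a2 \/ b1 = a3) /\ (b2 = a1 \/ b2 = a2 \/ b2 = a3).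
Proof.
  intros. destruct (classic (a1 = t)). subst. exists a2, a3. intuition.
  destruct (classic (a2 = t)). subst. exists a1, a3. intuition.
  exists a1, a2. intuition.
Qed.

Lemma far_nbrs y c : big y -> y <> c -> exists y1 y2, adj y y1 /\ adj y y2 /\ y1 <> y2 /\
  ~ comp y y1 c /\ ~ comp y y2 c.
Proof.
  intros [a1 [a2 [a3 [H1 [H2 [H3 [N12 [N13 N23]]]]]]]] Hyc.
  destruct (comp_ex y c (not_eq_sym Hyc)) as [t [Ht _]].
  destruct (two_others t a1 a2 a3 N12 N13 N23) as [b1 [b2 [Nb [Nb1 [Nb2 [E1 E2]]]]]].
  exists b1, b2. split. intuition; subst; auto. split. intuition; subst; auto. split; auto.
  split; intros Hc; [apply Nb1|apply Nb2]; eapply comp_uniq; eauto.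
Qed.

Hypothesis Hfin : finite_metric_dim adj.

Lemma D_bounded c : exists M, forall z, big z -> z <> c -> dd c z <= M.
Proof.
  destruct Hfin as [W [m [HW Hc]]]. destruct (hc_eq_to_list W m Hc) as [lW [_ [_ HlW]]].
  exists (fold_right max 0 (map (dd c) lW)).
  assert (Hm : forall s, In s lW -> dd c s <= fold_right max 0 (map (dd c) lW)).
  { clear. induction lW as [|x lW IH]; simpl; intros s Hs. destruct Hs. destruct Hs as [<-|Hs]. lia. specialize (IH s Hs). lia. }
  intros z Hz Hzc. destruct (far_nbrs z c Hz Hzc) as [y1 [y2 [A1 [A2 [N [C1 C2]]]]]].
  destruct (LB_hit W z y1 y2 HW A1 A2 N) as [[s [Hs Hcs]]|[s [Hs Hcs]]].
  - pose proof (comp_split z y1 s c Hcs C1). pose proof (Hm s (proj1 (HlW s) Hs)). lia.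
  - pose proof (comp_split z y2 s c Hcs C2). pose proof (Hm s (proj1 (HlW s) Hs)). lia.
Qed.

Lemma Lstar c a : adj c a -> PB c a \/ exists y y1 y2, PB y y1 /\ PB y y2 /\ y1 <> y2 /\
  (forall z, comp y y1 z -> comp c a z) /\ (forall z, comp y y2 z -> comp c a z).
Proof.
  intros Hca. destruct (classic (exists z, comp c a z /\ big z)) as [Hex|Hno].
  - right. destruct (D_bounded c) as [M HM].
    assert (Hq : exists k, exists z, comp c a z /\ big z /\ dd c z = M - k).
    { destruct Hex as [z [Hz1 Hz2]]. exists (M - dd c z), z. split; auto. split; auto.
      pose proof (HM z Hz2 (comp_ne _ _ _ Hz1)). lia. }
    destruct (ex_min _ Hq) as [k [[y [Hy1 [Hy2 Hy3]]] Hmin]].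
    assert (Hmaxy : forall z, comp c a z -> big z -> dd c z <= dd c y).
    { intros z Hz1 Hz2. pose proof (HM z Hz2 (comp_ne _ _ _ Hz1)).
      assert (k <= M - dd c z). { apply Hmin. exists z. split; auto. split; auto. lia. }
      pose proof (HM y Hy2 (comp_ne _ _ _ Hy1)). lia. }
    destruct (far_nbrs y c Hy2 (comp_ne _ _ _ Hy1)) as [y1 [y2 [A1 [A2 [N [C1 C2]]]]]].
    assert (Hsub : forall yi, adj y yi -> ~ comp y yi c -> forall z, comp y yi z -> comp c a z).
    { intros yi Ai Ci z Hz. eapply comp_nest; eauto. }
    assert (Hpb : forall yi, adj y yi -> ~ comp y yi c -> PB y yi).
    { intros yi Ai Ci. split; auto. apply Br_pathlike; auto.
      intros z Hz Hbig. pose proof (Hmaxy z (Hsub yi Ai Ci z Hz) Hbig).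
      pose proof (comp_split y yi z c Hz Ci).
      assert (dd y z <> 0). { intros E. exact (comp_ne _ _ _ Hz (eq_sym (dd_0 _ _ E))). }
      lia. }
    exists y, y1, y2. split. apply Hpb; auto. split. apply Hpb; auto. split; auto.
    split; apply Hsub; auto.
  - left. split; auto. apply Br_pathlike; auto. intros z Hz Hb. apply Hno; eauto.
Qed.

Lemma hit_in S c a : Hit S -> adj c a -> PB c a \/ exists s, S s /\ comp c a s.
Proof.
  intros HS Hca. destruct (Lstar c a Hca) as [|[y [y1 [y2 [P1 [P2 [N [S1 S2]]]]]]]]; auto.
  right. destruct (HS y y1 y2 P1 P2 N) as [[s [Hs Hc]]|[s [Hs Hc]]]; eauto.
Qed.

Lemma hit_two S c a b : Hit S -> adj c a -> adj c b -> a <> b ->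
  (exists s, S s /\ comp c a s) \/ (exists s, S s /\ comp c b s).
Proof.
  intros HS Ha Hb N. destruct (hit_in S c a HS Ha) as [Pa|]; auto.
  destruct (hit_in S c b HS Hb) as [Pb|]; auto.
Qed.

Lemma Hit_resolving S : Hit S -> resolving_set adj S.
Proof.
  intros HS u v Huv. apply NNPP. intros Hn.
  assert (Heq : forall s, S s -> dd u s = dd v s).
  { intros s Hs. apply NNPP. intros Hne. apply Hn. exists s. split; auto. apply resolves_iff; auto. }
  assert (Hne : exists s, S s).
  { destruct Hmax as [u0 Hu0]. apply big_deg in Hu0.
    destruct Hu0 as [a1 [a2 [a3 [H1 [H2 [_ [N12 _]]]]]]].
    destruct (hit_two S u0 a1 a2 HS H1 H2 N12) as [[s [Hs _]]|[s [Hs _]]]; eauto. }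
  destruct Hne as [s0 Hs0].
  assert (Hq : exists k c, dd c u = dd c v /\ dd c u = k).
  { exists (dd s0 u), s0. split; auto. rewrite !(dd_sym s0). auto. }
  destruct (ex_min _ Hq) as [k [[c [Ec Ek]] Hmin]].
  assert (Hcu : u <> c). { intros E. subst. rewrite dd_refl in Ec. symmetry in Ec. apply dd_0 in Ec. auto. }
  assert (Hcv : v <> c). { intros E. subst. rewrite dd_refl in Ec. apply dd_0 in Ec. auto. }
  destruct (comp_ex c u Hcu) as [a [Ca Ea]]. destruct (comp_ex c v Hcv) as [b [Cb Eb]].
  assert (Nab : a <> b).
  { intros E. subst b. assert (k <= dd a u). { apply Hmin. exists a. split; auto. lia. } lia. }
  assert (Hav : ~ comp c a v). { intros C. apply Nab. eapply comp_uniq; eauto. }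
  assert (Hbu : ~ comp c b u). { intros C. apply Nab. eapply comp_uniq; eauto. }
  assert (Ha : ~ exists s, S s /\ comp c a s).
  { intros [s [Hs Cs]]. specialize (Heq s Hs).
    assert (~ comp c b s). { intros C. apply Nab. eapply comp_uniq; eauto. }
    pose proof (comp_split c b v s Cb H).
    pose proof (dd_tri s a u). pose proof (comp_dd _ _ _ Cs).
    rewrite !(dd_sym s) in *. rewrite (dd_sym a u) in *. rewrite (dd_sym c u) in *. lia. }
  assert (Hb : ~ exists s, S s /\ comp c b s).
  { intros [s [Hs Cs]]. specialize (Heq s Hs).
    assert (~ comp c a s). { intros C. apply Nab. eapply comp_uniq; eauto. }
    pose proof (comp_split c a u s Ca H).
    pose proof (dd_tri s b v). pose proof (comp_dd _ _ _ Cs).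
    rewrite !(dd_sym s) in *. rewrite (dd_sym b v) in *. rewrite (dd_sym c v) in *. lia. }
  destruct (hit_two S c a b HS (proj1 Ca) (proj1 Cb) Nab); auto.
Qed.


Definition good (v : V) : Prop := 2 <= P adj v.

Lemma good_big v : good v -> big v.
Proof. intros H. apply big_deg, good_deg; auto. Qed.

Lemma DJ v w s v' w' : PB v w -> good v -> comp v w s -> PB v' w' -> good v' -> comp v' w' s ->
  v = v' /\ w = w'.
Proof.
  intros P1 G1 C1 P2 G2 C2.
  destruct (classic (v = v')) as [E|Hne].
  - subst. split; auto. eapply comp_uniq; eauto.
  - exfalso.
    assert (N1 : ~ comp v w v'). { intros C. apply (PB_small v w v' P1 C), good_big; auto. }
    assert (N2 : ~ comp v' w' v). { intros C. apply (PB_small v' w' v P2 C), good_big; auto. }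
    pose proof (comp_split v w s v' C1 N1). pose proof (comp_split v' w' s v C2 N2).
    rewrite (dd_sym v v') in *. assert (dd v' v = 0) by lia. apply dd_0 in H1. auto.
Qed.

Definition sumf (g : V -> nat) (l : list V) : nat := fold_right (fun v acc => g v + acc) 0 l.

Lemma sumf_le g h l : (forall v, In v l -> g v <= h v) -> sumf g l <= sumf h l.
Proof. induction l; simpl; intros H. lia. pose proof (H a (or_introl eq_refl)). specialize (IHl (fun v Hv => H v (or_intror Hv))). lia. Qed.

Lemma sumf_eq g h l : (forall v, In v l -> g v <= h v) -> sumf h l <= sumf g l -> forall v, In v l -> g v = h v.
Proof.
  induction l; simpl; intros H E v Hv. destruct Hv.
  pose proof (H a (or_introl eq_refl)). pose proof (sumf_le g h l (fun v Hv => H v (or_intror Hv))).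
  destruct Hv as [<-|Hv]. lia. apply IHl; auto. lia.
Qed.

Lemma sumf_ext g h l : (forall v, In v l -> g v = h v) -> sumf g l = sumf h l.
Proof. induction l; simpl; intros H; auto; rewrite (H a (or_introl eq_refl)), IHl; auto. Qed.

Lemma len_concat (F : V -> list V) l : length (concat (map F l)) = sumf (fun v => length (F v)) l.
Proof. induction l; simpl; auto. rewrite length_app, IHl; auto. Qed.

Lemma in_concat_map (F : V -> list V) l x : In x (concat (map F l)) <-> exists v, In v l /\ In x (F v).
Proof.
  rewrite in_concat. split.
  - intros [L [HL Hx]]. apply in_map_iff in HL. destruct HL as [v [<- Hv]]. eauto.
  - intros [v [Hv Hx]]. exists (F v). split; auto. apply in_map; auto.
Qed.

Lemma nodup_concat (F : V -> list V) l : NoDup l -> (forall v, In v l -> NoDup (F v)) ->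
  (forall v v' x, In v l -> In v' l -> v <> v' -> In x (F v) -> In x (F v') -> False) ->
  NoDup (concat (map F l)).
Proof.
  induction l; simpl; intros N H D. constructor.
  inversion N; subst. apply NoDup_app. apply H; auto. apply IHl; auto.
  intros v v' x Hv Hv'; apply D; auto.
  intros x Hx Hx'. apply in_concat_map in Hx'. destruct Hx' as [v [Hv Hxv]].
  apply (D a v x); auto. intros E; subst; auto.
Qed.

Lemma filter_ge1 (Q : V -> Prop) (L : list V) : NoDup L ->
  (forall w1 w2, In w1 L -> In w2 L -> w1 <> w2 -> Q w1 \/ Q w2) ->
  length L - 1 <= length (filter (fun w => bP (Q w)) L).
Proof.
  induction L as [|a t IH]; simpl; intros N H. lia.
  inversion N; subst. destruct (bP (Q a)) eqn:E.
  - simpl. assert (length t - 1 <= length (filter (fun w => bP (Q w)) t)).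
    { apply IH; auto; intros w1 w2 H1 H2; apply H; simpl; auto. }
    lia.
  - assert (Hall : forall w, In w t -> Q w).
    { intros w Hw. destruct (H a w (or_introl eq_refl) (or_intror Hw)) as [Hq|Hq]; auto.
      intros E'; subst; auto. apply bP_true in Hq. congruence. }
    assert (Hf : filter (fun w => bP (Q w)) t = t).
    { clear -Hall. induction t as [|b t IHt]; simpl; auto.
      rewrite (proj2 (bP_true _) (Hall b (or_introl eq_refl))).
      rewrite IHt; auto. intros; apply Hall; simpl; auto. }
    rewrite Hf. lia.
Qed.

Definition LwF (v : V) : list V := epsilon (inhabits [])
  (fun Lw => NoDup Lw /\ (forall w, PB v w <-> In w Lw) /\ P adj v = length Lw).
Lemma LwF_spec v : NoDup (LwF v) /\ (forall w, PB v w <-> In w (LwF v)) /\ P adj v = length (LwF v).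
Proof. unfold LwF. apply epsilon_spec. apply P_spec. Qed.

Section Count.
Variable S : V -> Prop.
Variable lS : list V.
Hypothesis HlS : NoDup lS.
Hypothesis HS : forall x, S x <-> In x lS.
Hypothesis HitS : Hit S.
Variable lv : list V.
Hypothesis Hlv : NoDup lv.
Hypothesis Hlvg : forall v, In v lv <-> good v.

Definition hitw (v : V) : list V := filter (fun w => bP (exists s, S s /\ comp v w s)) (LwF v).
Definition wit (v w : V) : V := epsilon (inhabits v) (fun s => S s /\ comp v w s).
Definition selS (v : V) : list V := map (wit v) (hitw v).

Lemma hitw_spec v w : In w (hitw v) <-> PB v w /\ exists s, S s /\ comp v w s.
Proof.
  unfold hitw. rewrite filter_In, bP_true. destruct (LwF_spec v) as [_ [H _]]. rewrite <- H. tauto.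
Qed.

Lemma wit_spec v w : In w (hitw v) -> S (wit v w) /\ comp v w (wit v w).
Proof. intros H. apply hitw_spec in H. unfold wit. apply epsilon_spec. apply H. Qed.

Lemma hitw_len v : good v -> P adj v - 1 <= length (hitw v).
Proof.
  intros G. destruct (LwF_spec v) as [N [H E]]. rewrite E. apply filter_ge1; auto.
  intros w1 w2 H1 H2 Hne. apply H in H1. apply H in H2. apply HitS; auto.
Qed.

Lemma hitw_nodup v : NoDup (hitw v).
Proof. apply NoDup_filter. apply LwF_spec. Qed.

Lemma selS_nodup v : NoDup (selS v).
Proof.
  unfold selS. apply NoDup_map_NoDup_ForallPairs; [|apply hitw_nodup].
  intros w1 w2 H1 H2 E. destruct (wit_spec v w1 H1) as [_ C1]. destruct (wit_spec v w2 H2) as [_ C2].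
  rewrite E in C1. eapply comp_uniq; eauto.
Qed.

Lemma selS_in v x : In x (selS v) -> exists w, PB v w /\ comp v w x /\ S x.
Proof.
  unfold selS. rewrite in_map_iff. intros [w [<- Hw]]. destruct (wit_spec v w Hw).
  exists w. split; auto. apply hitw_spec in Hw. apply Hw.
Qed.

Definition Lall : list V := concat (map selS lv).

Lemma Lall_nodup : NoDup Lall.
Proof.
  apply nodup_concat; auto. intros; apply selS_nodup.
  intros v v' x Hv Hv' Hne H1 H2. apply selS_in in H1. apply selS_in in H2.
  destruct H1 as [w [P1 [C1 _]]]. destruct H2 as [w' [P2 [C2 _]]].
  apply Hne. eapply (DJ v w x v' w'); eauto; apply Hlvg; auto.
Qed.

Lemma Lall_incl : incl Lall lS.
Proof.
  intros x Hx. apply in_concat_map in Hx. destruct Hx as [v [_ Hx]]. apply selS_in in Hx.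
  apply HS. destruct Hx as [? [? [? ?]]]; auto.
Qed.

Definition Nsum : nat := sumf (fun v => P adj v - 1) lv.

Lemma count_le : Nsum <= length lS.
Proof.
  apply Nat.le_trans with (length Lall).
  - unfold Lall. rewrite len_concat. apply sumf_le. intros v Hv. unfold selS. rewrite length_map.
    apply hitw_len, Hlvg; auto.
  - apply NoDup_incl_length. apply Lall_nodup. apply Lall_incl.
Qed.

Lemma count_tight : length lS <= Nsum ->
  (forall v, In v lv -> length (hitw v) = P adj v - 1) /\ (forall x, S x <-> In x Lall).
Proof.
  intros Hle.
  assert (HL : length Lall <= length lS) by (apply NoDup_incl_length; [apply Lall_nodup|apply Lall_incl]).
  assert (HE : length Lall = sumf (fun v => length (hitw v)) lv).
  { unfold Lall. rewrite len_concat. apply sumf_ext. intros v _. unfold selS. apply length_map. }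
  split.
  - intros v Hv. symmetry. apply (sumf_eq (fun v => P adj v - 1) (fun v => length (hitw v)) lv); auto.
    intros u Hu. apply hitw_len, Hlvg; auto. fold Nsum. lia.
  - intros x. rewrite HS. split; intros Hx.
    + assert (sumf (fun v => P adj v - 1) lv <= sumf (fun v => length (hitw v)) lv).
      { apply sumf_le. intros u Hu. apply hitw_len, Hlvg; auto. }
      refine (NoDup_length_incl (l' := lS) Lall_nodup _ Lall_incl x Hx).
      unfold Nsum in *. lia.
    + apply Lall_incl; auto.
Qed.

End Count.


Definition vdec : forall x y : V, {x = y} + {x <> y} := fun x y => excluded_middle_informative (x = y).

Lemma lv_ex : exists lv, NoDup lv /\ forall v, In v lv <-> good v.
Proof.
  destruct Hfin as [W [m [HW Hc]]]. destruct (hc_eq_to_list W m Hc) as [lW [_ [_ HlW]]].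
  set (Own := fun s v => exists w, PB v w /\ good v /\ comp v w s).
  set (owner := fun s => epsilon (inhabits s) (Own s)).
  exists (nodup vdec (map owner (filter (fun s => bP (exists v, Own s v)) lW))).
  split. apply NoDup_nodup. intros v. rewrite nodup_In, in_map_iff. split.
  - intros [s [<- Hs]]. apply filter_In in Hs. destruct Hs as [_ Hs]. pose proof (proj1 (bP_true (exists v, Own s v)) Hs) as Hs2. clear Hs. rename Hs2 into Hs.
    pose proof (epsilon_spec (inhabits s) (Own s) Hs) as [w [_ [G _]]]. exact G.
  - intros G. pose proof G as G'. apply good_iff in G'. destruct G' as [w1 [w2 [P1 [P2 N]]]].
    destruct (resolving_Hit W HW v w1 w2 P1 P2 N) as [[s [Hs Cs]]|[s [Hs Cs]]].
    + assert (Ho : Own s v) by (exists w1; auto).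
      exists s. split. pose proof (epsilon_spec (inhabits s) (Own s) (ex_intro _ v Ho)) as [w' [P' [G'' C']]].
      destruct (DJ _ _ _ _ _ P' G'' C' P1 G Cs) as [E _]. exact E.
      apply filter_In. split. apply HlW; auto. apply bP_true. eauto.
    + assert (Ho : Own s v) by (exists w2; auto).
      exists s. split. pose proof (epsilon_spec (inhabits s) (Own s) (ex_intro _ v Ho)) as [w' [P' [G'' C']]].
      destruct (DJ _ _ _ _ _ P' G'' C' P2 G Cs) as [E _]. exact E.
      apply filter_In. split. apply HlW; auto. apply bP_true. eauto.
Qed.

Lemma sel_v v (sv : list V) (Bs : list (V -> Prop)) dB dx :
  2 <= P adj v -> length sv = P adj v - 1 -> length Bs = P adj v - 1 ->
  (forall i, i < length Bs -> branch_path adj v (nth i Bs dB) /\ nth i sv dx <> v /\ nth i Bs dB (nth i sv dx)) ->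
  (forall i j, i < length Bs -> j < length Bs -> i <> j -> ~ same_set (nth i Bs dB) (nth j Bs dB)) ->
  NoDup sv /\ (forall x, In x sv -> exists w, PB v w /\ comp v w x) /\
  (forall w1 w2, PB v w1 -> PB v w2 -> w1 <> w2 ->
     (exists x, In x sv /\ comp v w1 x) \/ (exists x, In x sv /\ comp v w2 x)).
Proof.
  intros G Ls LB Hi Hd.
  set (ub := fun i => epsilon (inhabits v) (fun w => PB v w /\ same_set (nth i Bs dB) (Br v w))).
  assert (Hub : forall i, i < length Bs -> PB v (ub i) /\ same_set (nth i Bs dB) (Br v (ub i))).
  { intros i H. apply (epsilon_spec (inhabits v) (fun w => PB v w /\ same_set (nth i Bs dB) (Br v w))).
    apply bp_PB, Hi; auto. }
  assert (Hcu : forall i, i < length Bs -> comp v (ub i) (nth i sv dx)).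
  { intros i H. destruct (Hi i H) as [_ [Hne Hin]]. destruct (Hub i H) as [_ Hs].
    apply Hs in Hin. destruct Hin; [congruence|auto]. }
  assert (Hinj : forall i j, i < length Bs -> j < length Bs -> ub i = ub j -> i = j).
  { intros i j H1 H2 E. destruct (Nat.eq_dec i j); auto. exfalso. apply (Hd i j H1 H2 n).
    destruct (Hub i H1) as [_ S1]. destruct (Hub j H2) as [_ S2]. rewrite E in S1.
    eapply same_set_trans; eauto. apply same_set_sym; auto. }
  split; [|split].
  - apply (NoDup_nth sv dx). intros i j H1 H2 E. rewrite Ls, <- LB in H1, H2.
    apply Hinj; auto. eapply comp_uniq. apply Hcu; auto. rewrite E. apply Hcu; auto.
  - intros x Hx. destruct (In_nth sv x dx Hx) as [i [H1 <-]]. rewrite Ls, <- LB in H1.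
    exists (ub i). split. apply Hub; auto. apply Hcu; auto.
  - intros w1 w2 P1 P2 N. apply NNPP. intros Hn.
    set (us := map ub (seq 0 (length Bs))).
    assert (Hus : NoDup us).
    { apply NoDup_map_NoDup_ForallPairs; [|apply seq_NoDup].
      intros a b Ha Hb E. apply in_seq in Ha; apply in_seq in Hb. apply Hinj; auto; lia. }
    assert (Hw : forall w, In w us -> PB v w /\ w <> w1 /\ w <> w2).
    { intros w Hw. apply in_map_iff in Hw. destruct Hw as [i [<- Hi']]. apply in_seq in Hi'.
      assert (Hi0 : i < length Bs) by lia. split. apply Hub; auto.
      assert (In (nth i sv dx) sv) by (apply nth_In; lia).
      split; intros E; apply Hn; [left|right]; exists (nth i sv dx); rewrite <- E; split; auto. }
    destruct (LwF_spec v) as [_ [HL EL]].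
    assert (Hle : length (w1 :: w2 :: us) <= length (LwF v)).
    { apply NoDup_incl_length.
      - constructor. intros [E|Hin]; [auto|]. apply Hw in Hin. tauto.
        constructor. intros Hin. apply Hw in Hin. tauto. auto.
      - intros z [<-|[<-|Hz]]; apply HL; auto. apply Hw; auto. }
    simpl in Hle. unfold us in Hle. rewrite length_map, length_seq in Hle. lia.
Qed.

Lemma firstn_props (l : list V) n : NoDup l -> NoDup (firstn n l) /\ incl (firstn n l) l.
Proof.
  intros N. pose proof (firstn_skipn n l) as E. split.
  - rewrite <- E in N. eapply NoDup_app_remove_r; eauto.
  - intros x Hx. rewrite <- E. apply in_or_app; auto.
Qed.

Definition sel0 (v : V) : list V := if bP (good v) then firstn (P adj v - 1) (LwF v) else [].

Lemma sel0_ok : obtained_by_selection adj (fun x => exists v, In x (sel0 v)).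
Proof.
  exists sel0. split; [|split].
  - intros v G. destruct (LwF_spec v) as [N [HL EL]].
    destruct (firstn_props (LwF v) (P adj v - 1) N) as [Nf If].
    assert (Hs : sel0 v = firstn (P adj v - 1) (LwF v)).
    { unfold sel0. rewrite (proj2 (bP_true (good v)) G). auto. }
    assert (Hlen : length (firstn (P adj v - 1) (LwF v)) = P adj v - 1).
    { rewrite length_firstn. lia. }
    rewrite Hs. split; auto.
    exists (map (Br v) (firstn (P adj v - 1) (LwF v))), (Br v v), v.
    rewrite length_map. split; auto. split.
    + intros i Hi. rewrite map_nth.
      assert (Hp : PB v (nth i (firstn (P adj v - 1) (LwF v)) v)) by (apply HL, If, nth_In; auto).
      split. apply PB_bp; auto. split. intros E. rewrite E in Hp. destruct Hp as [Ha _]. eapply airr; eauto.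
      right. apply comp_self. apply Hp.
    + intros i j Hi Hj Hne Hss. rewrite !map_nth in Hss. apply Hne.
      apply (proj1 (NoDup_nth _ v) Nf); auto. apply (Br_inj v); auto.
      apply (proj2 (HL _) (If _ (nth_In _ _ Hi))). apply (proj2 (HL _) (If _ (nth_In _ _ Hj))).
  - intros v Hv. unfold sel0. destruct (bP (good v)) eqn:E; auto. pose proof (proj1 (bP_true (good v)) E) as E2. unfold good in E2. lia.
  - intros x. tauto.
Qed.

Section Final.
Variable lv : list V.
Hypothesis Hlv : NoDup lv.
Hypothesis Hlvg : forall v, In v lv <-> good v.
Variable d0 : V.

Lemma sel_basis S : obtained_by_selection adj S ->
  Hit S /\ has_card eq S (sumf (fun v => P adj v - 1) lv).
Proof.
  intros [sel [H1 [H2 H3]]].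
  assert (Hv : forall v, good v -> NoDup (sel v) /\ (forall x, In x (sel v) -> exists w, PB v w /\ comp v w x) /\
     (forall w1 w2, PB v w1 -> PB v w2 -> w1 <> w2 ->
       (exists x, In x (sel v) /\ comp v w1 x) \/ (exists x, In x (sel v) /\ comp v w2 x)) /\
     length (sel v) = P adj v - 1).
  { intros v G. destruct (H1 v G) as [Ls [Bs [dB [dx [LB [Hi Hd]]]]]].
    destruct (sel_v v (sel v) Bs dB dx G Ls LB Hi Hd) as [A [B C]]. auto. }
  assert (Hgood : forall v x, In x (sel v) -> good v).
  { intros v x Hx. unfold good. destruct (le_lt_dec 2 (P adj v)); auto. rewrite H2 in Hx; auto. destruct Hx. }
  split.
  - intros v w1 w2 P1 P2 N.
    assert (G : good v) by (apply good_iff; eauto).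
    destruct (Hv v G) as [_ [_ [C _]]].
    destruct (C w1 w2 P1 P2 N) as [[x [Hx Cx]]|[x [Hx Cx]]]; [left|right]; exists x; split; auto;
      apply H3; eauto.
  - replace (sumf (fun v => P adj v - 1) lv) with (length (concat (map sel lv))).
    + apply list_to_hc. exact d0.
      * apply nodup_concat; auto. intros v Hin. apply Hv, Hlvg; auto.
        intros v v' x Hin Hin' Hne Hx Hx'.
        destruct (Hv v (Hgood v x Hx)) as [_ [B _]]. destruct (Hv v' (Hgood v' x Hx')) as [_ [B' _]].
        destruct (B x Hx) as [w [Pw Cw]]. destruct (B' x Hx') as [w' [Pw' Cw']].
        apply Hne. eapply (DJ v w x v' w'); eauto.
      * intros x. rewrite in_concat_map. rewrite H3. split.
        -- intros [v Hx]. exists v. split; auto. apply Hlvg. eauto.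
        -- intros [v [_ Hx]]; eauto.
    + rewrite len_concat. apply sumf_ext. intros v Hin. apply Hv, Hlvg; auto.
Qed.

End Final.


Lemma main_inside :
  (exists n, metric_dim_is adj n /\
     fsum_is (fun v => if 3 <=? deg adj v then P adj v - 1 else 0) n) /\
  (forall S : V -> Prop, metric_basis adj S <-> obtained_by_selection adj S).
Proof.
  destruct Hmax as [d0 _].
  destruct lv_ex as [lv [Hlv Hlvg]].
  set (N := sumf (fun v => P adj v - 1) lv).
  set (S0 := fun x => exists v, In x (sel0 v)).
  destruct (sel_basis lv Hlv Hlvg d0 S0 sel0_ok) as [Hit0 Hc0].
  assert (LB : forall S m, resolving_set adj S -> has_card eq S m -> N <= m).
  { intros S m HS Hc. destruct (hc_eq_to_list S m Hc) as [lS [HlS [Hl HSl]]]. subst m.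
    exact (count_le S lS HSl (resolving_Hit S HS) lv Hlv Hlvg). }
  assert (Hmd : metric_dim_is adj N).
  { split. exists S0. split; auto. apply Hit_resolving; auto. exact LB. }
  assert (Huniq : forall n, metric_dim_is adj n -> n = N).
  { intros n [[S' [HS' Hc']] Hle]. pose proof (LB S' n HS' Hc').
    pose proof (Hle S0 N (Hit_resolving S0 Hit0) Hc0). lia. }
  split.
  - exists N. split; auto. exists lv. split; auto. split.
    + intros v Hv. rewrite fval in Hv. apply Hlvg. unfold good. lia.
    + change (sumf (fun v => P adj v - 1) lv = sumf (fun v => if 3 <=? deg adj v then P adj v - 1 else 0) lv).
      apply sumf_ext. intros v _. symmetry. apply fval.
  - intros S. split.
    + intros [Hres [n [Hcard Hmdi]]]. apply Huniq in Hmdi. subst n.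
      destruct (hc_eq_to_list S N Hcard) as [lS [HlS [Hl HSl]]].
      destruct (count_tight S lS HSl (resolving_Hit S Hres) lv Hlv Hlvg ltac:(unfold Nsum; lia)) as [T1 T2].
      exists (fun v => if bP (good v) then selS S v else []). split; [|split].
      * intros v G. rewrite (proj2 (bP_true (good v)) G).
        assert (Hlen : length (selS S v) = P adj v - 1).
        { unfold selS. rewrite length_map. apply T1, Hlvg; auto. }
        split; auto. exists (map (Br v) (hitw S v)), (Br v v), v.
        rewrite length_map. split. unfold selS in Hlen; rewrite length_map in Hlen; auto. split.
        -- intros i Hi. rewrite map_nth.
           assert (Hin : In (nth i (hitw S v) v) (hitw S v)) by (apply nth_In; auto).
           destruct (wit_spec S v _ Hin) as [Sw Cw].
           assert (Ex : nth i (selS S v) v = wit S v (nth i (hitw S v) v)).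
           { unfold selS. rewrite (nth_indep _ v (wit S v v)). apply map_nth. rewrite length_map; auto. }
           rewrite Ex. split. apply PB_bp. apply (hitw_spec S v _), Hin. split.
           apply (comp_ne _ _ _ Cw). right; auto.
        -- intros i j Hi Hj Hne Hss. rewrite !map_nth in Hss. apply Hne.
           apply (proj1 (NoDup_nth _ v) (hitw_nodup S v)); auto. apply (Br_inj v); auto.
           apply (proj1 (hitw_spec S v _) (nth_In _ _ Hi)). apply (proj1 (hitw_spec S v _) (nth_In _ _ Hj)).
      * intros v Hv. destruct (bP (good v)) eqn:E; auto.
        pose proof (proj1 (bP_true (good v)) E) as E2. unfold good in E2. lia.
      * intros x. split.
        -- intros Hx. apply T2 in Hx. apply in_concat_map in Hx. destruct Hx as [v [Hv Hx]].
           exists v. rewrite (proj2 (bP_true (good v)) (proj1 (Hlvg v) Hv)). auto.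
        -- intros [v Hx]. destruct (bP (good v)). apply selS_in in Hx. destruct Hx as [? [? [? ?]]]; auto.
           destruct Hx.
    + intros Hsel. destruct (sel_basis lv Hlv Hlvg d0 S Hsel) as [HitS HcS].
      split. apply Hit_resolving; auto. exists N. split; auto.
Qed.

End Tree.

Theorem theorem4 (V : Type) (adj : V -> V -> Prop) :
  is_tree adj -> @infinite_vertices V -> locally_finite adj ->
  max_degree_ge3 adj -> finite_metric_dim adj ->
  (exists n, metric_dim_is adj n /\
     fsum_is (fun v => if 3 <=? deg adj v then P adj v - 1 else 0) n) /\
  (forall S : V -> Prop, metric_basis adj S <-> obtained_by_selection adj S).
Proof.
  intros Ht _ Hl Hm Hf. apply main_inside; auto. apply Ht.
Qed.
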